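(* Let $\mathbb{A},\mathbb{B}$ be real square matrices of the same size such that $\mathbb{A}^{s}=\frac{1}{2}(\mathbb{A}+\mathbb{A}^{\dagger})$ is positive definite and $\mathbb{B}$ is a non-singular symmetric matrix with exactly one negative eigenvalue. Then $\mathbb{A}\mathbb{B}$ is invertible and has exactly one negative eigenvalue, and the geometric multiplicity of that eigenvalue is $1$.
   Context: $\mathbb{M}^{\dagger}$ denotes the transpose of $\mathbb{M}$. *)

(* Defs.v *)
From HB Require Import structures.
From mathcomp Require Import all_boot all_order all_algebra.
From mathcomp Require Import reals.
Set Implicit Arguments. Unset Strict Implicit. Unset Printing Implicit Defensive.
Import Order.TTheory GRing.Theory Num.Theory.
Local Open Scope ring_scope.

Definition sympart (R : realType) (n : nat) (A : 'M[R]_n) : 'M[R]_n :=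
  2^-1 *: (A + A^T).

Definition posdef (R : realType) (n : nat) (M : 'M[R]_n) : Prop :=
  M^T = M /\ forall x : 'cV[R]_n, x != 0 -> 0 < (x^T *m M *m x) 0 0.

(* M has exactly one negative (real) eigenvalue, counted with algebraic
   multiplicity: there is a unique negative eigenvalue and it is a simple root
   of the characteristic polynomial. *)
Definition one_neg_eig_alg (R : realType) (n : nat) (M : 'M[R]_n) : Prop :=
  exists l : R, [/\ l < 0, eigenvalue M l, mup l (char_poly M) = 1%N &
    forall m : R, m < 0 -> eigenvalue M m -> m = l].

(* Main.v *)
Require Import Defs.
From HB Require Import structures.
From mathcomp Require Import all_boot all_order all_algebra.
From mathcomp Require Import reals.
From mathcomp Require Import polyrcf complex spectral sesquilinear.
From mathcomp Require Import ring lra.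
Import Order.TTheory GRing.Theory Num.Theory.
Local Open Scope ring_scope.

Module Aux1.
Set Implicit Arguments. Unset Strict Implicit. Unset Printing Implicit Defensive.

Section QF.
Variable (R : comPzRingType) (n : nat).
Definition qf (M : 'M[R]_n) (u v : 'rV[R]_n) : R := (u *m M *m v^T) 0 0.

Lemma qfT M u v : qf M u v = qf M^T v u.
Proof.
rewrite /qf; have E (X : 'M[R]_1) : X 0 0 = X^T 0 0 by rewrite [RHS]mxE.
rewrite E.
by rewrite !trmx_mul trmxK mulmxA.
Qed.

Lemma qfDl M u1 u2 v : qf M (u1 + u2) v = qf M u1 v + qf M u2 v.
Proof. by rewrite /qf !mulmxDl mxE. Qed.
Lemma qfZl M a u v : qf M (a *: u) v = a * qf M u v.
Proof. by rewrite /qf -!scalemxAl mxE. Qed.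
Lemma qfDr M u v1 v2 : qf M u (v1 + v2) = qf M u v1 + qf M u v2.
Proof. by rewrite /qf linearD /= mulmxDr mxE. Qed.
Lemma qfZr M a u v : qf M u (a *: v) = a * qf M u v.
Proof. by rewrite /qf linearZ /= -scalemxAr mxE. Qed.
End QF.

Section Real.
Variable (R : realType).

Lemma posA n (A : 'M[R]_n) : posdef (sympart A) ->
  forall v : 'rV_n, v != 0 -> 0 < qf A v v.
Proof.
case=> _ H v v0; have := H v^T; rewrite trmx_eq0 => /(_ v0).
rewrite trmxK /sympart -scalemxAr -scalemxAl mxE mulmxDr mulmxDl mxE.
have -> : (v *m A^T *m v^T) 0 0 = qf A v v by rewrite -[LHS]/(qf A^T v v) qfT trmxK.
rewrite -/(qf A v v) => h; lra.
Qed.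

Lemma unit_eig0 n (M : 'M[R]_n) : (M \in unitmx) = ~~ eigenvalue M 0.
Proof.
by rewrite /eigenvalue /eigenspace raddf0 subr0 kermx_eq0 row_free_unit negbK.
Qed.

Lemma posA_unit n (A : 'M[R]_n) : posdef (sympart A) -> A \in unitmx.
Proof.
move=> /posA H; rewrite unit_eig0; apply/eigenvalueP => -[v].
rewrite scale0r => vA v0; have := H v v0.
by rewrite /qf vA mul0mx mxE ltxx.
Qed.
End Real.

Section Sign.
Variable (R : realType).

Lemma sg_minfty0 (p : {poly R}) : (forall x, x <= 0 -> ~~ root p x) ->
  Num.sg p.[0] = sgp_minfty p.
Proof.
move=> H; apply: (@sgp_minftyP _ 0) => [x|]; rewrite in_itv /= ?lexx //.
exact: H.
Qed.

Lemma sg_sign k (x : R) : Num.sg ((-1) ^+ k * x) = (-1) ^+ k * Num.sg x.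
Proof. by rewrite sgrM sgrX sgrN1. Qed.

Lemma sign_cancel k (x y : R) : (-1) ^+ k * x = (-1) ^+ k * y -> x = y.
Proof. by apply: mulfI; rewrite signr_eq0. Qed.

Lemma char0 n (M : 'M[R]_n) : (char_poly M).[0] = (-1) ^+ n * \det M.
Proof. by rewrite horner_coef0 char_poly_det. Qed.

Lemma det_pos n (M : 'M[R]_n) : (forall x, x <= 0 -> ~~ eigenvalue M x) ->
  0 < \det M.
Proof.
move=> H; have H' : forall x, x <= 0 -> ~~ root (char_poly M) x.
  by move=> x /H; rewrite eigenvalue_root_char.
have := @sg_minfty0 (char_poly M) H'.
rewrite /sgp_minfty size_char_poly /= (monicP (char_poly_monic M)) mulr1 char0.
rewrite sg_sign sgrX sgrN1 -[X in _ = X]mulr1 => /sign_cancel h.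
by rewrite -sgr_cp0 h.
Qed.

Lemma detB_neg n (B : 'M[R]_n) (l : R) : l < 0 -> B \in unitmx ->
  mup l (char_poly B) = 1%N ->
  (forall m : R, m < 0 -> eigenvalue B m -> m = l) -> \det B < 0.
Proof.
move=> l0 Bu Hmup Hl; set p := char_poly B.
have p0 : p != 0 by apply: monic_neq0; apply: char_poly_monic.
have := mup_geq l 1 p0; rewrite Hmup expr1 leqnn => /esym/dvdpP[q pq].
have q0 : q != 0 by apply: contraNneq p0; rewrite pq => ->; rewrite mul0r.
have nql : ~~ root q l.
  apply/negP; rewrite root_factor_theorem => dq.
  have := mup_geq l 2 p0; rewrite Hmup expr2 pq.
  by rewrite dvdp_mul // dvdpp.
have sq : size q = n.
  have := size_char_poly B; rewrite -/p pq size_Mmonic ?monicXsubC //.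
  by rewrite size_XsubC addn2 => -[].
have lq : lead_coef q = 1.
  have := monicP (char_poly_monic B); rewrite -/p pq lead_coef_Mmonic //.
  exact: monicXsubC.
have Hq : forall x, x <= 0 -> ~~ root q x.
  move=> x x0; apply/negP => rq.
  have : eigenvalue B x by rewrite eigenvalue_root_char -/p pq rootM rq.
  have [->|xn0] := eqVneq x 0.
    by rewrite -[eigenvalue _ _]negbK -unit_eig0 Bu.
  have xlt : x < 0 by rewrite lt_neqAle xn0 x0.
  by move=> /(Hl _ xlt) xl; move: rq; rewrite xl (negPf nql).
have hp : p.[0] = q.[0] * (- l) by rewrite pq hornerM hornerXsubC sub0r.
have := @sg_minfty0 q Hq.
rewrite /sgp_minfty sq lq mulr1 sgrX sgrN1 => h.
have := congr1 Num.sg hp; rewrite sgrM h (gtr0_sg (_ : 0 < - l)) ?oppr_gt0 // mulr1.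
rewrite /p char0 sg_sign.
have n0 : (0 < n)%N by rewrite -sq size_poly_gt0.
rewrite -[in (-1) ^+ n](prednK n0) exprS mulN1r mulNr -mulrN -[X in _ = X]mulr1 /= => /sign_cancel /eqP.
by rewrite eqr_oppLR -sgr_cp0.
Qed.

Lemma neg_eig n (M : 'M[R]_n) : \det M < 0 -> exists l, l < 0 /\ eigenvalue M l.
Proof.
move=> d0; set p := char_poly M.
have p0 : p != 0 by apply: monic_neq0; apply: char_poly_monic.
set b := cauchy_bound p.
have sb : Num.sg p.[- b] = (-1) ^+ n.
  rewrite (@sgp_minftyP _ (- b) p (le_cauchy_bound p0)) ?in_itv /= ?lexx //.
  by rewrite /sgp_minfty size_char_poly (monicP (char_poly_monic M)) mulr1 sgrX sgrN1.
have b0 : - b <= 0 by rewrite oppr_le0 cauchy_bound_ge0.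
have [|c] := @poly_ivtoo _ p (- b) 0 b0.
  rewrite -sgr_cp0 sgrM sb /p char0 sg_sign mulrA -expr2 sqrr_sign mul1r.
  by rewrite sgr_cp0.
rewrite in_itv /= => /andP[_ c0] rc; exists c; split => //.
by rewrite eigenvalue_root_char.
Qed.
End Sign.

Section K2.
Variable (R : realType).

Lemma detA_pos n (A : 'M[R]_n) : posdef (sympart A) -> 0 < \det A.
Proof.
move=> /posA H; apply: det_pos => x x0; apply/eigenvalueP => -[v vA v0].
have := H v v0; rewrite /qf vA -scalemxAl mxE.
have s0 : 0 <= (v *m v^T) 0 0.
  by rewrite mxE; apply: sumr_ge0 => i _; rewrite mxE -expr2 sqr_ge0.
by rewrite ltNge mulr_le0_ge0.
Qed.

Lemma scal (l1 l2 a b P11 P12 P21 P22 : R) : l1 < 0 -> l2 < 0 ->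
  l1 * P21 = l2 * P12 ->
  0 < a * (a * P11 + b * P12) + b * (a * P21 + b * P22) ->
  0 < (- l1 * a) * ((- l1 * a) * P11 + (- l2 * b) * P12) +
      (- l2 * b) * ((- l1 * a) * P21 + (- l2 * b) * P22) ->
  a * (a * (l1 * P11) + b * (l1 * P21)) + b * (a * (l2 * P12) + b * (l2 * P22)) < 0.
Proof.
move=> h1 h2 rel E1 E2.
set G := a * (a * (l1 * P11) + b * (l1 * P21)) + b * (a * (l2 * P12) + b * (l2 * P22)).
have id : (- l1 - l2) * (- G) =
  (- l1 * a) * ((- l1 * a) * P11 + (- l2 * b) * P12) +
      (- l2 * b) * ((- l1 * a) * P21 + (- l2 * b) * P22)
  + (l1 * l2) * (a * (a * P11 + b * P12) + b * (a * P21 + b * P22))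
  + a * b * (l1 - l2) * (l1 * P21 - l2 * P12).
  rewrite /G; ring.
rewrite rel subrr mulr0 addr0 in id.
have p12 : 0 < l1 * l2 by rewrite nmulr_rgt0.
have : 0 < (- l1 - l2) * (- G).
  by rewrite id addr_gt0 // mulr_gt0.
rewrite pmulr_rgt0 ?oppr_gt0 //; lra.
Qed.

Lemma Qrel n (A B : 'M[R]_n) (u x z : 'rV_n) l :
  u *m B = l *: x -> qf B u (z *m A) = l * qf A z x.
Proof.
rewrite /qf => ->; rewrite trmx_mul -scalemxAl mulmxA mxE.
by rewrite -/(qf A^T x z) qfT trmxK.
Qed.
Arguments Qrel {n} A {B u x} z {l}.

Lemma K2 n (A B : 'M[R]_n) (x1 x2 : 'rV_n) (l1 l2 : R) :
  posdef (sympart A) -> B^T = B -> l1 < 0 -> l2 < 0 ->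
  x1 *m (A *m B) = l1 *: x1 -> x2 *m (A *m B) = l2 *: x2 ->
  (forall a b : R, (a != 0) || (b != 0) -> a *: x1 + b *: x2 != 0) ->
  forall a b : R, (a != 0) || (b != 0) ->
  qf B (a *: (x1 *m A) + b *: (x2 *m A)) (a *: (x1 *m A) + b *: (x2 *m A)) < 0.
Proof.
move=> /posA pos Bs h1 h2 e1 e2 ind a b ab.
rewrite mulmxA in e1; rewrite mulmxA in e2.
rewrite !(qfDl, qfZl, qfDr, qfZr) !(Qrel A _ e1, Qrel A _ e2).
have sym : l1 * qf A x2 x1 = l2 * qf A x1 x2.
  by rewrite -(Qrel A _ e1) -(Qrel A _ e2) qfT Bs.
apply: (scal h1 h2 sym).
  by have := pos _ (ind a b ab); rewrite !(qfDl, qfZl, qfDr, qfZr).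
have ab' : (- l1 * a != 0) || (- l2 * b != 0).
  by rewrite !mulf_eq0 !oppr_eq0 (lt_eqF h1) (lt_eqF h2).
by have := pos _ (ind _ _ ab'); rewrite !(qfDl, qfZl, qfDr, qfZr).
Qed.
End K2.

End Aux1.

Module Aux2.
Import Num.Def Aux1.
Set Implicit Arguments. Unset Strict Implicit. Unset Printing Implicit Defensive.

Lemma char_poly_conj (F : fieldType) n (P D : 'M[F]_n) : P \in unitmx ->
  char_poly (invmx P *m D *m P) = char_poly D.
Proof.
move=> Pu; rewrite /char_poly /char_poly_mx.
have -> : 'X%:M - map_mx polyC (invmx P *m D *m P) =
  map_mx polyC (invmx P) *m ('X%:M - map_mx polyC D) *m map_mx polyC P.
  rewrite !map_mxM mulmxBr mulmxBl; congr (_ - _).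
  rewrite mul_mx_scalar -scalemxAl -map_mxM mulVmx // map_mx1.
  by rewrite scalemx1.
rewrite !det_mulmx !det_map_mx mulrC mulrA -rmorphM -det_mulmx mulmxV //.
by rewrite det1 rmorph1 mul1r.
Qed.

Section Cx.
Variable R : realType.
Local Notation C := (R[i]).
Local Notation f := (real_complex R).
Local Open Scope sesquilinear_scope.

Lemma fR (x : R) : f x \is Num.real.
Proof. by apply/complex_realP; exists x. Qed.

Lemma conj_f (x : R) : (f x)^* = f x.
Proof. exact: conj_Creal (fR x). Qed.

Lemma map_conj_f m p (M : 'M[R]_(m, p)) : map_mx conjC (map_mx f M) = map_mx f M.
Proof. by apply/matrixP => i j; rewrite !mxE conj_f. Qed.

Lemma herm n (B : 'M[R]_n) : B^T = B -> map_mx f B \is hermsymmx.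
Proof.
move=> Bs; apply/is_hermitianmxP; rewrite expr0 scale1r.
by rewrite map_trmx Bs map_conj_f.
Qed.

Lemma quad n (P : 'M[C]_n) (d : 'rV[C]_n) (z : 'rV_n) : P \is unitarymx ->
  (z *m (invmx P *m diag_mx d *m P) *m (z ^t conjC)) 0 0 =
  \sum_k d 0 k * ((z *m P ^t conjC) 0 k * ((z *m P ^t conjC) 0 k)^*).
Proof.
move=> Pu; rewrite invmx_unitary //.
have -> : z *m ((P ^t conjC) *m diag_mx d *m P) *m (z ^t conjC) =
  (z *m P ^t conjC) *m diag_mx d *m ((z *m P ^t conjC) ^t conjC).
  by rewrite trmx_mul map_mxM trmxCK !mulmxA.
rewrite mxE; apply: eq_bigr => k _.
by rewrite mul_mx_diag !mxE mulrAC mulrC.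
Qed.

Lemma F1core n (P : 'M[C]_n) (d : 'rV[C]_n) (Y1 Y2 : 'rV[C]_n) :
  P \is unitarymx -> (forall k, d 0 k \is Num.real) ->
  (forall k k', d 0 k < 0 -> d 0 k' < 0 -> k = k') ->
  exists a b : C, ((a != 0) || (b != 0)) /\
   0 <= ((a *: Y1 + b *: Y2) *m (invmx P *m diag_mx d *m P) *m
           (a *: Y1 + b *: Y2) ^t conjC) 0 0.
Proof.
move=> Pu dr du.
pose phi k (z : 'rV[C]_n) := (z *m P ^t conjC) 0 k.
have key : forall z, (forall k, d 0 k < 0 -> phi k z = 0) ->
    0 <= (z *m (invmx P *m diag_mx d *m P) *m z ^t conjC) 0 0.
  move=> z hz; rewrite quad //; apply: sumr_ge0 => k _.
  have [dk|dk] := boolP (d 0 k < 0).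
    by rewrite -/(phi k z) hz // mul0r mulr0.
  apply: mulr_ge0; last exact: mul_conjC_ge0.
  by rewrite real_leNgt ?real0 ?dr.
have phiL : forall k a b z1 z2, phi k (a *: z1 + b *: z2) = a * phi k z1 + b * phi k z2.
  by move=> k a b z1 z2; rewrite /phi mulmxDl -!scalemxAl !mxE.
case: (pickP (fun k => d 0 k < 0)) => [k0 hk0|hn]; last first.
  exists 1, 0; split; first by rewrite oner_neq0.
  by apply: key => k; rewrite hn.
have [/andP[/eqP c1 /eqP c2]|nc] := boolP ((phi k0 Y1 == 0) && (phi k0 Y2 == 0)).
  exists 1, 0; split; first by rewrite oner_neq0.
  by apply: key => k dk; rewrite (du _ _ dk hk0) phiL c1 c2 !mulr0 addr0.
exists (phi k0 Y2), (- phi k0 Y1); split.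
  by move: nc; rewrite negb_and oppr_eq0 orbC.
apply: key => k dk; rewrite (du _ _ dk hk0) phiL.
by rewrite mulNr [phi k0 Y2 * _]mulrC subrr.
Qed.

Lemma qfC n (B : 'M[R]_n) (u v : 'rV[R]_n) :
  (map_mx f u *m map_mx f B *m (map_mx f v)^T) 0 0 = f (qf B u v).
Proof. by rewrite map_trmx -!map_mxM mxE. Qed.

Lemma entD (A B : 'M[C]_1) : (A + B) 0 0 = A 0 0 + B 0 0.
Proof. by rewrite mxE. Qed.
Lemma entB (A B : 'M[C]_1) : (A - B) 0 0 = A 0 0 - B 0 0.
Proof. by rewrite !mxE. Qed.
Lemma entN (A : 'M[C]_1) : (- A) 0 0 = - A 0 0.
Proof. by rewrite !mxE. Qed.
Lemma entZ a (A : 'M[C]_1) : (a *: A) 0 0 = a * A 0 0.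
Proof. by rewrite mxE. Qed.

Lemma expand n (B : 'M[R]_n) (r s : 'rV[R]_n) : B^T = B ->
  ((map_mx f r + 'i%R *: map_mx f s) *m map_mx f B *m
    (map_mx f r + 'i%R *: map_mx f s) ^t conjC) 0 0 = f (qf B r r + qf B s s).
Proof.
move=> Bs.
have -> : (map_mx f r + 'i%R *: map_mx f s) ^t conjC =
    (map_mx f r)^T - 'i *: (map_mx f s)^T.
  apply/matrixP => i j; rewrite !mxE rmorphD rmorphM /= conjCi !conj_f.
  by rewrite mulNr.
rewrite !(mulmxDl, mulmxDr, mulmxN) -!scalemxAl -!scalemxAr.
rewrite !(entD, entN, entZ) !qfC.
have -> : qf B s r = qf B r s by rewrite qfT Bs.
have ii : 'i * 'i = -1 :> C by rewrite -expr2 sqrCi.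
by rewrite rmorphD /= mulrA ii mulN1r opprK addrA addrK.
Qed.

Lemma F1 n (B : 'M[R]_n) (l : R) : B^T = B -> mup l (char_poly B) = 1%N ->
  (forall m, m < 0 -> eigenvalue B m -> m = l) ->
  forall y1 y2 : 'rV[R]_n, ~ (forall a b : R, (a != 0) || (b != 0) ->
     qf B (a *: y1 + b *: y2) (a *: y1 + b *: y2) < 0).
Proof.
move=> Bs Hmup Hl y1 y2 Hneg.
set BC := map_mx f B.
have hBC : BC \is hermsymmx := herm Bs.
set P := spectralmx BC; set d := spectral_diag BC.
have Pu : P \is unitarymx := spectral_unitarymx BC.
have /orthomx_spectralP eqBC := hermitian_normalmx hBC.
have dr : forall k, d 0 k \is Num.real.
  by move=> k; apply: (mxOverP (hermitian_spectral_diag_real hBC)).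
have cp : char_poly BC = \prod_(i < n) ('X - (d 0 i)%:P).
  rewrite [in LHS]eqBC char_poly_conj ?unitarymx_unit // char_poly_trig ?diag_mx_is_trig //.
  by apply: eq_bigr => i _; rewrite mxE eqxx mulr1n.
have dl : forall k, d 0 k < 0 -> d 0 k = f l.
  move=> k dk; have /complex_realP [r dr'] := dr k.
  have ev : eigenvalue BC (d 0 k).
    rewrite eigenvalue_root_char cp /root horner_prod; apply/prodf_eq0; exists k => //.
    by rewrite hornerXsubC subrr.
  rewrite dr' /BC eigenvalue_map in ev.
  rewrite dr' (Hl r) //; move: dk.
  by rewrite dr' -[X in _ < X]/((0:R)%:C%C) ltcR.
have du : forall k k', d 0 k < 0 -> d 0 k' < 0 -> k = k'.
  move=> k k' hk hk'; apply/eqP; apply: contraT => nkk'.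
  have : ('X - (f l)%:P) ^+ 2 %| char_poly BC.
    rewrite cp (bigD1 k) // (bigD1 k') /=.
      rewrite (dl k hk) (dl k' hk') mulrA expr2; apply: dvdp_mulr; exact: dvdpp.
    by rewrite eq_sym.
  rewrite /BC -map_char_poly.
  rewrite -map_polyXsubC.
  rewrite -rmorphXn dvdp_map.
  move=> hd; have := mup_geq l 2 (monic_neq0 (char_poly_monic B)).
  by rewrite Hmup hd.
have [a [b [ab H0]]] := F1core (map_mx f y1) (map_mx f y2) Pu dr du.
rewrite -eqBC in H0.
move: a b ab H0 => [a1 a2] [b1 b2] ab H0.
have ez : (Complex a1 a2) *: map_mx f y1 + (Complex b1 b2) *: map_mx f y2 =
   map_mx f (a1 *: y1 + b1 *: y2) + 'i%R *: map_mx f (a2 *: y1 + b2 *: y2).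
  rewrite !map_mxD !map_mxZ [Complex a1 a2]complexE [Complex b1 b2]complexE /=.
  rewrite complexiE !scalerDl !scalerDr -!scalerA.
  by rewrite addrACA.
rewrite ez expand // in H0.
move: H0; rewrite -[X in X <= _]/((0 : R)%:C%C) lecR => H0.
have nr : forall u v : R, qf B (u *: y1 + v *: y2) (u *: y1 + v *: y2) <= 0.
  move=> u v; have [h|h] := boolP ((u != 0) || (v != 0)).
    exact/ltW/Hneg.
  move: h; rewrite negb_or !negbK => /andP[/eqP -> /eqP ->].
  by rewrite !scale0r addr0 /qf !mul0mx mxE.
move: ab; rewrite !eq_complex /= => ab.
have [h|h] := boolP ((a1 != 0) || (b1 != 0)).
  by have := Hneg _ _ h; have := nr a2 b2; lra.
have h2 : (a2 != 0) || (b2 != 0).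
  by move: ab h; case: (a1 == 0); case: (a2 == 0); case: (b1 == 0); case: (b2 == 0).
by have := Hneg _ _ h2; have := nr a1 b1; lra.
Qed.
End Cx.

End Aux2.

Import Aux1 Aux2.
Unset Implicit Arguments.

Theorem lemma4p2 (R : realType) (n : nat) (A B : 'M[R]_n) :
  posdef (sympart A) ->
  B^T = B -> B \in unitmx -> one_neg_eig_alg B ->
  (A *m B) \in unitmx /\
  exists l : R, [/\ l < 0, eigenvalue (A *m B) l,
    (forall m : R, m < 0 -> eigenvalue (A *m B) m -> m = l) &
    \rank (eigenspace (A *m B) l) = 1%N].
Proof.
move=> hA Bs Bu [l [l0 el ml Hl]].
have Au := posA_unit hA.
have ABu : A *m B \in unitmx by rewrite unitmx_mul Au Bu.
split => //.
have dAB : \det (A *m B) < 0.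
  by rewrite det_mulmx pmulr_rlt0 ?detA_pos // (detB_neg l0 Bu ml Hl).
have [m [m0 em]] := neg_eig dAB.
have noind : forall (x1 x2 : 'rV[R]_n) (l1 l2 : R), l1 < 0 -> l2 < 0 ->
    x1 *m (A *m B) = l1 *: x1 -> x2 *m (A *m B) = l2 *: x2 ->
    ~ (forall a b : R, (a != 0) || (b != 0) -> a *: x1 + b *: x2 != 0).
  move=> x1 x2 l1 l2 h1 h2 e1 e2 ind.
  have hF := F1 Bs ml Hl (y1 := x1 *m A) (y2 := x2 *m A).
  have hK := K2 hA Bs h1 h2 e1 e2 ind. exact: (hF hK).

have [x1 e1 x10] := eigenvalueP em.
exists m; split => //.
  move=> m' m'0 em'; apply/eqP; apply: contraT => ne; exfalso.
  have [x2 e2 x20] := eigenvalueP em'.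
  apply: (noind x1 x2 m m' m0 m'0 e1 e2) => a b ab; apply/eqP => h.
  have h' : (a * m) *: x1 + (b * m') *: x2 = 0.
    by rewrite -!scalerA -e1 -e2 !scalemxAl -mulmxDl h mul0mx.
  have E : (b * (m' - m)) *: x2 = ((a * m) *: x1 + (b * m') *: x2) - m *: (a *: x1 + b *: x2).
    by apply/rowP => j; rewrite !mxE; ring.
  rewrite h' h scaler0 subr0 in E.
  move/eqP: E; rewrite scalemx_eq0 mulf_eq0 subr_eq0 (negPf x20) (negPf ne) !orbF => /eqP b0.
  rewrite b0 scale0r addr0 in h; move/eqP: h; rewrite scalemx_eq0 (negPf x10) orbF => a0.
  by move: ab; rewrite a0 b0 eqxx.
apply/eqP; rewrite eqn_leq; apply/andP; split; last first.
  by rewrite lt0n mxrank_eq0.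
rewrite leqNgt; apply/negP => r2.
have : ~~ (eigenspace (A *m B) m <= x1)%MS.
  by apply/negP => /mxrankS; rewrite rank_rV x10 leqNgt r2.
move/row_subPn => [i ni].
set x2 := row i (eigenspace (A *m B) m) in ni.
have e2 : x2 *m (A *m B) = m *: x2 by apply/eigenspaceP; exact: row_sub.
clearbody x2.
apply: (noind x1 x2 m m m0 m0 e1 e2) => a b ab; apply/eqP => h.
have [b0|bn0] := eqVneq b 0.
  rewrite b0 scale0r addr0 in h; move/eqP: h; rewrite scalemx_eq0 (negPf x10) orbF => a0.
  by move: ab; rewrite (eqP a0) b0 eqxx.
have : x2 = (- (b^-1 * a)) *: x1.
  apply/rowP => j; have := congr1 (fun v : 'rV[R]_n => v 0 j) h; rewrite !mxE => hj.
  have hj' : b * x2 0 j = - (a * x1 0 j) by apply/eqP; rewrite -addr_eq0 addrC hj.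
  by rewrite -[x2 0 j](mulKf bn0) hj'; ring.
by move=> ex; move: ni; rewrite ex scalemx_sub.
Qed.
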